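(* Let $T\in\mathbb{C}^{l\times l}$ and let $\lambda_1,\lambda_2,\lambda_3$ be three distinct eigenvalues of $T$. Then for all $\gamma=(\gamma_{12},\gamma_{13},\gamma_{23})\in\mathbb{C}^3$, \[ \operatorname{rank}\begin{bmatrix} T-\lambda_1 I_l & \gamma_{12} I_l & \gamma_{13} I_l\\ 0 & T-\lambda_2 I_l & \gamma_{23} I_l\\ 0&0&T-\lambda_3 I_l\end{bmatrix}\le 3l-3 , \] equivalently $s_{3l-2}$ of this matrix equals $0$.
   Context: $s_j(\cdot)$ denotes the $j$-th largest singular value of a matrix ($s_1\ge s_2\ge\cdots$). *)

(* Defs.v *)
From HB Require Import structures.
From mathcomp Require Import all_boot all_order all_algebra.
From mathcomp.real_closed Require Import complex.
From mathcomp Require Import reals.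
Set Implicit Arguments. Unset Strict Implicit. Unset Printing Implicit Defensive.
Import Order.TTheory GRing.Theory Num.Theory.
Local Open Scope ring_scope.

Definition blockT {F : fieldType} (l : nat) (T : 'M[F]_l) (l1 l2 l3 g12 g13 g23 : F)
  : 'M[F]_(l + (l + l)) :=
  block_mx (T - l1%:M) (row_mx (g12%:M) (g13%:M))
           0 (block_mx (T - l2%:M) (g23%:M) 0 (T - l3%:M)).

(* Main.v *)
Require Import Defs.
From HB Require Import structures.
From mathcomp Require Import all_boot all_order all_algebra.
From mathcomp.real_closed Require Import complex.
From mathcomp Require Import reals.
From mathcomp Require Import zify ring.
Import Order.TTheory GRing.Theory Num.Theory.
Local Open Scope ring_scope.
Local Open Scope complex_scope.

Section Aux.
Local Close Scope complex_scope.
Lemma key (F : fieldType) (l : nat) (T : 'M[F]_l) (l1 l2 l3 g12 g13 g23 : F)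
  (v1 v2 v3 : 'rV[F]_l) :
  v1 *m T = l1 *: v1 -> v1 != 0 ->
  v2 *m T = l2 *: v2 -> v2 != 0 ->
  v3 *m T = l3 *: v3 -> v3 != 0 ->
  l1 != l2 -> l1 != l3 -> l2 != l3 ->
  (\rank (blockT T l1 l2 l3 g12 g13 g23) <= 3 * l - 3)%N.
Proof.
move=> e1 n1 e2 n2 e3 n3 d12 d13 d23.
set c := - g23 / (l2 - l3).
set a := - g12 / (l1 - l2).
set b := - (g13 + a * g23) / (l1 - l3).
pose k1 : 'rV[F]_(l + (l + l)) := row_mx 0 (row_mx 0 v3).
pose k2 : 'rV[F]_(l + (l + l)) := row_mx 0 (row_mx v2 (c *: v2)).
pose k3 : 'rV[F]_(l + (l + l)) := row_mx v1 (row_mx (a *: v1) (b *: v1)).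
pose K := col_mx k1 (col_mx k2 k3).
have hv : forall (v : 'rV[F]_l) (x y : F), v *m T = x *: v -> v *m (T - y%:M) = (x - y) *: v.
  by move=> v x y e; rewrite mulmxBr e mul_mx_scalar scalerBl.
have sub : (K <= kermx (blockT T l1 l2 l3 g12 g13 g23))%MS.
  apply/sub_kermxP; rewrite /K /blockT !mul_col_mx; apply/eqP; rewrite !col_mx_eq0;
  apply/and3P; split; apply/eqP;
  rewrite !mul_row_block ?mul_mx_row ?mulmx0 ?mul0mx ?mul_mx_row ?mulmx0 ?mul0mx.
  all: rewrite ?add_row_mx ?addr0 ?add0r -?scalemxAl ?mul_mx_scalar ?(hv _ _ _ e1) ?(hv _ _ _ e2) ?(hv _ _ _ e3) ?subrr ?scale0r ?scalerA -?scalerDl ?row_mx0. all: try done.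
  - have -> : g23 + c * (l2 - l3) = 0.
      by rewrite /c; field; rewrite subr_eq0.
    by rewrite scale0r !row_mx0.
  - have -> : g12 + a * (l1 - l2) = 0.
      by rewrite /a; field; rewrite subr_eq0.
    have -> : g13 + (a * g23 + b * (l1 - l3)) = 0.
      by rewrite /b; field; rewrite subr_eq0.
    by rewrite !scale0r !row_mx0.
have free : row_free K.
  apply: inj_row_free => w.
  rewrite -[w](hsubmxK w) -[rsubmx w](hsubmxK (rsubmx w)).
  move: (lsubmx w) (lsubmx (rsubmx w)) (rsubmx (rsubmx w)) => x y z.
  rewrite [x]mx11_scalar [y]mx11_scalar [z]mx11_scalar.
  rewrite /K !mul_row_col !mul_scalar_mx /k1 /k2 /k3 !scale_row_mx !add_row_mx !scaler0 ?addr0 ?add0r.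
  rewrite -[X in _ = X -> _]row_mx0 -[X in _ = row_mx _ X -> _]row_mx0.
  move/eq_row_mx => [h1 /eq_row_mx [h2 h3]].
  move: h1 => /eqP; rewrite scaler_eq0 (negbTE n1) orbF => /eqP hz.
  move: h2; rewrite hz scale0r addr0 => /eqP; rewrite scaler_eq0 (negbTE n2) orbF => /eqP hy.
  move: h3; rewrite hz ?hy !scale0r !addr0 => /eqP; rewrite scaler_eq0 (negbTE n3) orbF => /eqP hx.
  by rewrite hx !raddf0 !row_mx0.
have rK : \rank K = 3%N by move: free; rewrite /row_free => /eqP.
have := mxrankS sub; rewrite mxrank_ker rK.
have := rank_leq_row (blockT T l1 l2 l3 g12 g13 g23).
lia.
Qed.
End Aux.

Theorem mainTheorem1 (R : realType) (l : nat) (T : 'M[R[i]]_l)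
    (lam1 lam2 lam3 : R[i])
    (h1 : eigenvalue T lam1) (h2 : eigenvalue T lam2) (h3 : eigenvalue T lam3)
    (d12 : lam1 != lam2) (d13 : lam1 != lam3) (d23 : lam2 != lam3)
    (g12 g13 g23 : R[i]) :
  (\rank (blockT T lam1 lam2 lam3 g12 g13 g23) <= 3 * l - 3)%N.
Proof.
case/eigenvalueP: h1 => v1 e1 n1.
case/eigenvalueP: h2 => v2 e2 n2.
case/eigenvalueP: h3 => v3 e3 n3.
exact: (@key (complex R) l T lam1 lam2 lam3 g12 g13 g23 v1 v2 v3 e1 n1 e2 n2 e3 n3 d12 d13 d23).
Qed.
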